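(* Let $H$ be a complex Hilbert space, $\varphi,\psi:[0,1]\to\mathbb{R}$ continuous, $A\in\mathbb{B}(H)$ and $t\in[0,1]$. Then $$\min\{|\varphi(t)+\psi(t)|,|\varphi(t)-\psi(t)|\}\,\omega(A)\le\omega_t(\varphi,\psi;A)\le\max\{|\varphi(t)+\psi(t)|,|\varphi(t)-\psi(t)|\}\,\omega(A),$$ and $$\frac12\min\{|\varphi(t)+\psi(t)|,|\varphi(t)-\psi(t)|\}\le n_t(\varphi,\psi;H)\le\frac12\max\{|\varphi(t)+\psi(t)|,|\varphi(t)-\psi(t)|\}.$$
   Context: $S_1(H)$ is the unit sphere of $H$, $\omega(T)=\sup_{x\in S_1(H)}|\langle Tx,x\rangle|$, $\omega_t(\varphi,\psi;A)=\sup_{x\in S_1(H)}|\langle(\varphi(t)A+\psi(t)A^* )x,x\rangle|$, and the weighted numerical index is $n_t(\varphi,\psi;H)=\inf\{\omega_t(\varphi,\psi;A):A\in\mathbb{B}(H),\ \|A\|=1\}$. *)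

(* Defs.v *)
From HB Require Import structures.
From mathcomp Require Import all_boot all_order all_algebra.
From mathcomp Require Import boolp classical_sets set_interval reals topology normedtype.
From mathcomp Require Import complex.
Set Implicit Arguments. Unset Strict Implicit. Unset Printing Implicit Defensive.
Import Order.TTheory GRing.Theory Num.Theory numFieldNormedType.Exports.
Local Open Scope ring_scope.
Local Open Scope classical_set_scope.

Section Hilbert.
Variable R : realType.
Local Notation C := R[i].

Definition cabs (z : C) : R := Normc.normc z.

Variable V : lmodType C.
Variable ip : V -> V -> C.

Definition is_inner_product : Prop :=
  [/\ forall (a : C) (x y z : V), ip (a *: x + y) z = a * ip x z + ip y z,
      forall x y : V, ip y x = (ip x y)^*%C,
      forall x : V, complex.Im (ip x x) = 0 /\ 0 <= complex.Re (ip x x)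
    & forall x : V, ip x x = 0 -> x = 0].

Definition hnorm (x : V) : R := Num.sqrt (complex.Re (ip x x)).

Definition hcomplete : Prop :=
  forall u : nat -> V,
    (forall e : R, 0 < e -> exists N, forall m n, (N <= m)%N -> (N <= n)%N ->
        hnorm (u m - u n) < e) ->
    exists l : V, forall e : R, 0 < e -> exists N, forall n, (N <= n)%N ->
        hnorm (u n - l) < e.

Definition is_Hilbert : Prop := is_inner_product /\ hcomplete.

Definition is_bounded_op (A : V -> V) : Prop :=
  (forall (a : C) (x y : V), A (a *: x + y) = a *: A x + A y) /\
  exists M : R, forall x, hnorm (A x) <= M * hnorm x.

Definition unit_sphere : set V := [set x | hnorm x = 1].

Definition opnorm (A : V -> V) : R := sup [set hnorm (A x) | x in unit_sphere].

Definition adjoint (A : V -> V) : V -> V :=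
  xget (fun _ => 0) [set B : V -> V | forall x y, ip (A x) y = ip x (B y)].

Definition numrad (T : V -> V) : R :=
  sup [set cabs (ip (T x) x) | x in unit_sphere].

Definition wnumrad (phi psi : R -> R) (t : R) (A : V -> V) : R :=
  numrad (fun x => ((phi t)%:C)%C *: A x + ((psi t)%:C)%C *: adjoint A x).

Definition wnumindex (phi psi : R -> R) (t : R) : R :=
  inf [set wnumrad phi psi t A | A in [set A | is_bounded_op A /\ opnorm A = 1]].

End Hilbert.

(* Main.v *)
Set Warnings "-notation-overridden,-ambiguous-paths".
Require Import Defs.
From HB Require Import structures.
From mathcomp Require Import all_boot all_order all_algebra.
From mathcomp Require Import boolp classical_sets set_interval reals topology normedtype.
From mathcomp Require Import complex.
From mathcomp Require Import ring lra.
Set Implicit Arguments. Unset Strict Implicit. Unset Printing Implicit Defensive.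
Import Order.TTheory GRing.Theory Num.Theory numFieldNormedType.Exports.
Local Open Scope ring_scope.
Local Open Scope classical_set_scope.
Local Open Scope complex_scope.
Local Notation Re := complex.Re.
Local Notation Im := complex.Im.

Section IP.
Variables (R : realType) (V : lmodType R[i]) (ip : V -> V -> R[i]).
Hypothesis HP : is_inner_product ip.

Lemma ipZDl a x y z : ip (a *: x + y) z = a * ip x z + ip y z.
Proof. by case: HP. Qed.
Lemma ipC x y : ip y x = (ip x y)^*.
Proof. by case: HP. Qed.
Lemma ip0l z : ip 0 z = 0.
Proof.
have := ipZDl 1 0 0 z; rewrite scaler0 addr0 mul1r => /eqP.
by rewrite -subr_eq subrr eq_sym => /eqP.
Qed.
Lemma ipDl x y z : ip (x + y) z = ip x z + ip y z.
Proof. by have := ipZDl 1 x y z; rewrite scale1r mul1r. Qed.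
Lemma ipZl a x z : ip (a *: x) z = a * ip x z.
Proof. by rewrite -[a *: x]addr0 ipZDl ip0l addr0. Qed.
Lemma ipNl x z : ip (- x) z = - ip x z.
Proof. by rewrite -scaleN1r ipZl mulN1r. Qed.
Lemma ipBl x y z : ip (x - y) z = ip x z - ip y z.
Proof. by rewrite ipDl ipNl. Qed.
Lemma ipDr x y z : ip z (x + y) = ip z x + ip z y.
Proof. by rewrite ipC ipDl rmorphD /= -!ipC. Qed.
Lemma ipZr a x z : ip z (a *: x) = a^* * ip z x.
Proof. by rewrite ipC ipZl rmorphM /= -ipC. Qed.
Lemma ipNr x z : ip z (- x) = - ip z x.
Proof. by rewrite -scaleN1r ipZr rmorphN rmorph1 mulN1r. Qed.
Lemma ipBr x y z : ip z (x - y) = ip z x - ip z y.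
Proof. by rewrite ipDr ipNr. Qed.
Lemma ip0r z : ip z 0 = 0.
Proof. by rewrite ipC ip0l rmorph0. Qed.

Definition nsq x := Re (ip x x).
Lemma ipxx x : ip x x = (nsq x)%:C.
Proof. by case: HP => _ _ /(_ x) [] + _ _; rewrite /nsq; case: (ip x x) => a b /= ->. Qed.
Lemma nsq_ge0 x : 0 <= nsq x.
Proof. by case: HP => _ _ /(_ x) []. Qed.
Lemma nsq0 x : nsq x = 0 -> x = 0.
Proof. by move=> h; case: HP => _ _ _; apply; rewrite ipxx h. Qed.
Lemma hnormE x : hnorm ip x = Num.sqrt (nsq x).
Proof. by []. Qed.
Lemma hnorm2 x : hnorm ip x ^+ 2 = nsq x.
Proof. by rewrite hnormE sqr_sqrtr // nsq_ge0. Qed.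
Lemma hnorm_ge0 x : 0 <= hnorm ip x.
Proof. exact: sqrtr_ge0. Qed.

Lemma ReJ (z : R[i]) : Re z^* = Re z. Proof. by case: z. Qed.
Lemma ImJ (z : R[i]) : Im z^* = - Im z. Proof. by case: z. Qed.
Lemma ReM (z w : R[i]) : Re (z * w) = Re z * Re w - Im z * Im w.
Proof. by case: z; case: w. Qed.
Lemma ImM (z w : R[i]) : Im (z * w) = Re z * Im w + Im z * Re w.
Proof. by case: z => a b; case: w => c d /=; ring. Qed.
Lemma ReD (z w : R[i]) : Re (z + w) = Re z + Re w. Proof. by case: z; case: w. Qed.
Lemma ImD (z w : R[i]) : Im (z + w) = Im z + Im w. Proof. by case: z; case: w. Qed.
Lemma ReN (z : R[i]) : Re (- z) = - Re z. Proof. by case: z. Qed.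
Lemma ImN (z : R[i]) : Im (- z) = - Im z. Proof. by case: z. Qed.
Lemma ReC (r : R) : Re r%:C = r. Proof. by []. Qed.
Lemma ImC (r : R) : Im r%:C = 0. Proof. by []. Qed.
Lemma cabsE (z : R[i]) : cabs z = Num.sqrt (Re z ^+ 2 + Im z ^+ 2).
Proof. by case: z. Qed.

Lemma nsqD x y : nsq (x + y) = nsq x + nsq y + 2 * Re (ip x y).
Proof.
rewrite /nsq ipDl !ipDr [ip y x]ipC !ReD ReJ; ring.
Qed.
Definition n2 (z : R[i]) := Re z ^+ 2 + Im z ^+ 2.
Lemma n2_ge0 (z : R[i]) : 0 <= n2 z.
Proof. by rewrite /n2 addr_ge0 // sqr_ge0. Qed.
Lemma cabs2 (z : R[i]) : cabs z ^+ 2 = n2 z.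
Proof. by rewrite cabsE sqr_sqrtr // n2_ge0. Qed.
Lemma cabs_ge0 (z : R[i]) : 0 <= cabs z.
Proof. by rewrite cabsE sqrtr_ge0. Qed.
Lemma mulJ (z : R[i]) : z * z^* = (n2 z)%:C.
Proof. case: z => a b; rewrite /n2 /=; apply/eqP; rewrite eq_complex /=; apply/andP; split; apply/eqP; ring. Qed.

Lemma nsqZ a x : nsq (a *: x) = n2 a * nsq x.
Proof. by rewrite /nsq ipZl ipZr mulrA mulJ ipxx ReM /= mulr0 subr0. Qed.
Lemma ReipZr (r : R) x y : Re (ip x (r%:C *: y)) = r * Re (ip x y).
Proof. by rewrite ipZr ReM /= oppr0 mul0r subr0. Qed.

Lemma CSre x y : Re (ip x y) ^+ 2 <= nsq x * nsq y.
Proof.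
have [y0|yn0] := eqVneq y 0; first by rewrite y0 ip0r /= expr0n /= mulr_ge0 ?nsq_ge0.
have q0 : 0 < nsq y.
  by rewrite lt_def nsq_ge0 andbT; apply/eqP => /nsq0 h; move: yn0; rewrite h eqxx.
set r := Re (ip x y); set q := nsq y; set p := nsq x.
have := nsq_ge0 (x + (- r / q)%:C *: y).
rewrite nsqD nsqZ ReipZr -/r -/p /n2 /= expr0n /= addr0 -/q => h.
have : 0 <= q * (p + (- r / q) ^+ 2 * q + 2 * (- r / q * r)) by rewrite mulr_ge0 // ltW.
have -> : q * (p + (- r / q) ^+ 2 * q + 2 * (- r / q * r)) = p * q - r ^+ 2.
  by field; rewrite gt_eqF.
by rewrite subr_ge0.
Qed.

Lemma CS2 x y : n2 (ip x y) <= nsq x * nsq y.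
Proof.
set z := ip x y.
have := CSre x (z *: y).
rewrite ipZr mulrC mulJ /= nsqZ.
have [z0|zp] := eqVneq (n2 z) 0; first by rewrite z0 mulr_ge0 ?nsq_ge0.
have zg : 0 < n2 z by rewrite lt_def zp n2_ge0.
rewrite expr2 mulrCA ler_pM2l //.
Qed.

Lemma CS x y : cabs (ip x y) <= hnorm ip x * hnorm ip y.
Proof.
rewrite cabsE !hnormE -sqrtrM ?nsq_ge0 //; apply: ler_wsqrtr; exact: CS2.
Qed.

Lemma sqr_le_le (a b : R) : 0 <= b -> a ^+ 2 <= b ^+ 2 -> a <= b.
Proof. by move=> hb h; nra. Qed.

Lemma Reip_le x y : Re (ip x y) <= hnorm ip x * hnorm ip y.
Proof.
apply: sqr_le_le; first by rewrite mulr_ge0 ?hnorm_ge0.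
by rewrite exprMn !hnorm2 CSre.
Qed.

Lemma hnormD x y : hnorm ip (x + y) <= hnorm ip x + hnorm ip y.
Proof.
apply: sqr_le_le; first by rewrite addr_ge0 ?hnorm_ge0.
rewrite hnorm2 nsqD -!hnorm2 sqrrD; have := Reip_le x y; lra.
Qed.

Lemma hnormZ a x : hnorm ip (a *: x) = cabs a * hnorm ip x.
Proof. by rewrite !hnormE nsqZ cabsE sqrtrM ?n2_ge0. Qed.
Lemma hnormN x : hnorm ip (- x) = hnorm ip x.
Proof.
rewrite -scaleN1r hnormZ; suff -> : cabs (-1 : R[i]) = 1 by rewrite mul1r.
by rewrite cabsE ReN ImN /= oppr0 expr0n /= addr0 sqrrN expr1n sqrtr1.
Qed.
Lemma hnorm0 : hnorm ip 0 = 0.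
Proof. by rewrite hnormE /nsq ip0l /= sqrtr0. Qed.
Lemma conjR (r : R) : (r%:C)^* = r%:C.
Proof. by apply/eqP; rewrite eq_complex /= oppr0 !eqxx. Qed.
Lemma conjR' (z : R[i]) : Im z = 0 -> z^* = z.
Proof. by case: z => a b /= ->; rewrite oppr0. Qed.
Lemma conjRN (z : R[i]) : Im z = 0 -> Num.conj z = z.
Proof. exact: conjR'. Qed.

Lemma sqr_lt_lt (a b : R) : 0 <= b -> a ^+ 2 < b ^+ 2 -> a < b.
Proof. by move=> hb h; nra. Qed.

Lemma le0_eps (a K : R) : 0 <= K -> (forall e, 0 < e -> a <= K * e) -> a <= 0.
Proof.
move=> K0 h; rewrite leNgt; apply/negP => a0.
have := h (a / (2 * (K + 1))); rewrite divr_gt0 // ?mulr_gt0 //; last by lra.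
move=> /(_ isT) h2.
have : K * (a / (2 * (K + 1))) < a.
  rewrite mulrA ltr_pdivrMr ?mulr_gt0 //; last by lra.
  nra.
lra.
Qed.

Lemma sqrtD_le (a b : R) : 0 <= a -> 0 <= b -> Num.sqrt (a + b) <= Num.sqrt a + Num.sqrt b.
Proof.
move=> a0 b0; apply: sqr_le_le; first by rewrite addr_ge0 ?sqrtr_ge0.
rewrite sqr_sqrtr ?addr_ge0 // sqrrD !sqr_sqrtr //.
have := sqrtr_ge0 a; have := sqrtr_ge0 b; nra.
Qed.

Lemma eps_N (e : R) : 0 < e -> exists N : nat, forall n, (N <= n)%N -> n.+1%:R^-1 < e.
Proof.
move=> e0; have [N hN] := ltr_add_invr e0; rewrite add0r in hN.
exists N => n hn; apply: le_lt_trans hN.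
rewrite lef_pV2 ?posrE ?ltr0n // ler_nat; by [].
Qed.

Lemma nsqN x : nsq (- x) = nsq x.
Proof. by rewrite /nsq ipNl ipNr opprK. Qed.

Hypothesis HC : hcomplete ip.

Lemma riesz (f : V -> R[i]) (K : R) :
  (forall a x y, f (a *: x + y) = a * f x + f y) ->
  (forall x, cabs (f x) <= K * hnorm ip x) ->
  exists y, forall x, f x = ip x y.
Proof.
move=> flin fK.
have f0 : f 0 = 0.
  have := flin 1 0 0; rewrite scaler0 addr0 mul1r => /eqP.
  by rewrite -subr_eq subrr eq_sym => /eqP.
have fZ a x : f (a *: x) = a * f x by rewrite -[a *: x]addr0 flin f0 addr0.
have fD x y : f (x + y) = f x + f y by have := flin 1 x y; rewrite scale1r mul1r.
have fB x y : f (x - y) = f x - f y by rewrite fD -scaleN1r fZ mulN1r.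
set K' := `|K|.
have K'0 : 0 <= K' by rewrite /K' normr_ge0.
have fK' x : cabs (f x) <= K' * hnorm ip x.
  by apply: (le_trans (fK x)); rewrite ler_wpM2r ?hnorm_ge0 // ler_norm.
have [fz|] := pselect (forall x, f x = 0).
  by exists 0 => x; rewrite fz ip0r.
move=> /existsNP [x1 fx1].
pose S := [set nsq x | x in [set x | f x = 1]].
have Sne : S !=set0.
  exists (nsq ((f x1)^-1 *: x1)), ((f x1)^-1 *: x1) => //.
  by rewrite /= fZ mulVf //; apply/eqP.
have Slb : has_lbound S by exists 0 => _ [x _ <-]; exact: nsq_ge0.
set d := inf S.
have d0 : 0 <= d by apply: lb_le_inf => // _ [x _ <-]; exact: nsq_ge0.
have dle x : f x = 1 -> d <= nsq x.
  by move=> fx; apply: (ge_inf Slb); exists x.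
have : forall n : nat, exists u, f u = 1 /\ nsq u < d + n.+1%:R^-1.
  move=> n; have hp : 0 < n.+1%:R^-1 :> R by rewrite invr_gt0 ltr0Sn.
  have [_ [u fu <-] hu] := inf_adherent hp (conj Sne Slb).
  by exists u; split.
move=> /choice [u hu].
have hquarter z : nsq ((2%:R^-1)%:C *: z) = 4%:R^-1 * nsq z.
  by rewrite nsqZ /n2 /= expr0n /= addr0 exprVn; congr (_^-1 * _); rewrite expr2 -natrM.
have par a b : nsq (a - b) + nsq (a + b) = 2 * nsq a + 2 * nsq b.
  rewrite nsqD nsqD nsqN ipNr ReN; lra.
have half2 : (2%:R^-1)%:C * (1 + 1) = 1 :> R[i].
  have -> : (1 + 1 : R[i]) = 2%:R by [].
  by rewrite fmorphV rmorph_nat mulVf // pnatr_eq0.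
have cau n m : nsq (u n - u m) <= 2 * n.+1%:R^-1 + 2 * m.+1%:R^-1.
  have [fn hn] := hu n; have [fm hm] := hu m.
  have hmid : d <= nsq ((2%:R^-1)%:C *: (u n + u m)).
    by apply: dle; rewrite fZ fD fn fm half2.
  rewrite hquarter in hmid.
  have := par (u n) (u m); rewrite !(mulrC 2 (_^-1)).
  move: hn hm hmid; clearbody d; move: (nsq _) (nsq _) (nsq _) (nsq _) (_.+1%:R^-1) (_.+1%:R^-1).
  move=> *; lra.
have ucau : forall e, 0 < e -> exists N, forall m n, (N <= m)%N -> (N <= n)%N ->
    hnorm ip (u m - u n) < e.
  move=> e e0; have e4 : 0 < e ^+ 2 / 4%:R by rewrite divr_gt0 // exprn_gt0.
  have [N hN] := eps_N e4.
  exists N => m n hm hn; apply: sqr_lt_lt; first exact: ltW.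
  rewrite hnorm2; have := cau m n; have := hN m hm; have := hN n hn.
  move: (nsq _) (m.+1%:R^-1) (n.+1%:R^-1) => *; lra.
have [x0 hx0] := HC ucau.
have fx0 : f x0 = 1.
  apply/eqP; rewrite -subr_eq0; apply/eqP/Normc.eq0_normc/le_anti.
  rewrite cabs_ge0 andbT.
  apply: (le0_eps K'0) => e e0; have [N hN] := hx0 e e0; have [fN _] := hu N.
  have -> : f x0 - 1 = f (x0 - u N) by rewrite fB fN.
  apply: le_trans (fK' _) _; rewrite ler_wpM2l // -hnormN opprB ltW //.
  exact: hN.
have hx0d : hnorm ip x0 <= Num.sqrt d.
  rewrite -subr_le0; apply: (@le0_eps _ 1) => // e e0; rewrite mul1r.
  have e4 : 0 < e ^+ 2 / 4%:R by rewrite divr_gt0 // exprn_gt0.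
  have e2 : 0 < e / 2%:R by rewrite divr_gt0.
  have [N1 hN1] := eps_N e4; have [N2 hN2] := hx0 _ e2.
  pose n := maxn N1 N2.
  have h1 := hN1 n (leq_maxl _ _); have h2 := hN2 n (leq_maxr _ _).
  have [_ hn] := hu n.
  have t1 : hnorm ip x0 <= hnorm ip (u n) + hnorm ip (x0 - u n).
    by apply: le_trans (hnormD _ _); rewrite addrC subrK.
  have t2 : hnorm ip (u n) <= Num.sqrt d + Num.sqrt (n.+1%:R^-1).
    apply: le_trans (sqrtD_le d0 _); last by rewrite invr_ge0.
    by rewrite hnormE ler_wsqrtr // ltW.
  have t3 : Num.sqrt (n.+1%:R^-1) < e / 2%:R.
    apply: sqr_lt_lt; first exact: ltW.
    rewrite sqr_sqrtr ?invr_ge0 //; move: h1; clearbody n.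
    move: (n.+1%:R^-1) => a; rewrite expr_div_n; move=> *; lra.
  have t4 : hnorm ip (x0 - u n) < e / 2%:R by rewrite -hnormN opprB.
  move: t1 t2 t3 t4; move: (hnorm ip _) (hnorm ip _) (hnorm ip _) (Num.sqrt _) (Num.sqrt _).
  move=> *; lra.
have nx0 : nsq x0 <= d.
  by rewrite -hnorm2 -(sqr_sqrtr d0) ler_pXn2r // ?nnegrE ?hnorm_ge0 ?sqrtr_ge0.
have key v : f v = 0 -> Re (ip x0 v) = 0.
  move=> fv; set r := Re (ip x0 v); set q := nsq v.
  have q0 : 0 <= q by exact: nsq_ge0.
  have h s : nsq x0 <= nsq (x0 + s%:C *: v).
    by apply: le_trans nx0 (dle _ _); rewrite fD fZ fv mulr0 addr0.
  have := h (- r / (q + 1)); rewrite nsqD nsqZ ReipZr -/r -/q /n2 /= expr0n /= addr0.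
  rewrite -addrA lerDl => hs.
  have e : (q + 1) ^+ 2 * ((- r / (q + 1)) ^+ 2 * q + 2 * (- r / (q + 1) * r)) = - (r ^+ 2 * (q + 2)).
    by field; rewrite gt_eqF //; lra.
  have : 0 <= (q + 1) ^+ 2 * ((- r / (q + 1)) ^+ 2 * q + 2 * (- r / (q + 1) * r)).
    by rewrite mulr_ge0 // sqr_ge0.
  rewrite e oppr_ge0 => h2.
  apply/eqP; rewrite -sqrf_eq0; apply/eqP/le_anti; rewrite sqr_ge0 andbT.
  move: h2; move: (r ^+ 2) => a; move=> *; nra.
have orth w : f w = 0 -> ip w x0 = 0.
  move=> fw; rewrite ipC; apply/eqP; rewrite conjc_eq0; apply/eqP.
  have h1 := key w fw.
  have h2 := key ('i *: w); rewrite fZ fw mulr0 in h2; have {h2} := h2 erefl.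
  rewrite ipZr ReM /= mul0r sub0r mulN1r opprK => h2.
  by move: h1 h2; case: (ip x0 w) => a b /= -> ->.
have nz : nsq x0 != 0.
  apply/eqP => /nsq0 x00; move: fx0; rewrite x00 f0 => /eqP; rewrite eq_sym oner_eq0.
  by [].
exists (((nsq x0)^-1)%:C *: x0) => x.
have := orth (x - f x *: x0); rewrite fB fZ fx0 mulr1 subrr => /(_ erefl).
rewrite ipBl ipZl ipxx => /eqP; rewrite subr_eq0 => /eqP hx.
by rewrite ipZr conjRN // hx mulrCA -rmorphM mulVf // mulr1.
Qed.

Lemma adjointP (A : V -> V) : is_bounded_op ip A ->
  forall x y, ip (A x) y = ip x (adjoint ip A y).
Proof.
move=> [Alin [M0 hM]].
apply: (@xgetPex _ (fun _ => 0) [set B : V -> V | forall x y, ip (A x) y = ip x (B y)]).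
have : forall y, exists z, forall x, ip (A x) y = ip x z.
  move=> y; apply: (@riesz (fun x => ip (A x) y) (M0 * hnorm ip y)).
    by move=> a x x'; rewrite Alin ipZDl.
  move=> x; apply: le_trans (CS _ _) _.
  rewrite mulrAC ler_wpM2r ?hnorm_ge0 //.
by move=> /choice [B hB]; exists B.
Qed.

Lemma sqr_normr (x : R) : `|x| ^+ 2 = x ^+ 2.
Proof. exact: real_normK (num_real x). Qed.

Lemma ptwise (p q : R) (z : R[i]) :
  Num.min `|p + q| `|p - q| * cabs z <= cabs (p%:C * z + q%:C * Num.conj z) /\
  cabs (p%:C * z + q%:C * Num.conj z) <= Num.max `|p + q| `|p - q| * cabs z.
Proof.
set m := Num.min _ _; set M := Num.max _ _.
have m0 : 0 <= m by rewrite le_min !normr_ge0.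
have M0 : 0 <= M by rewrite le_max !normr_ge0.
have m1 : m ^+ 2 <= (p + q) ^+ 2.
  by rewrite -sqr_normr ler_pXn2r ?nnegrE ?normr_ge0 // ge_min lexx.
have m2 : m ^+ 2 <= (p - q) ^+ 2.
  by rewrite -[(p - q) ^+ 2]sqr_normr ler_pXn2r ?nnegrE ?normr_ge0 // ge_min lexx orbT.
have M1 : (p + q) ^+ 2 <= M ^+ 2.
  by rewrite -sqr_normr ler_pXn2r ?nnegrE ?normr_ge0 // le_max lexx.
have M2 : (p - q) ^+ 2 <= M ^+ 2.
  by rewrite -[(p - q) ^+ 2]sqr_normr ler_pXn2r ?nnegrE ?normr_ge0 // le_max lexx orbT.
have e : n2 (p%:C * z + q%:C * Num.conj z) = (p + q) ^+ 2 * Re z ^+ 2 + (p - q) ^+ 2 * Im z ^+ 2.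
  by case: z => a b; rewrite /n2 /=; ring.
have ha := sqr_ge0 (Re z); have hb := sqr_ge0 (Im z).
split; apply: sqr_le_le.
- exact: cabs_ge0.
- rewrite exprMn !cabs2 e /n2; nra.
- by rewrite mulr_ge0 ?cabs_ge0.
- rewrite exprMn !cabs2 e /n2; nra.
Qed.

Lemma sup_le_c (X : Type) (D : set X) (f g : X -> R) (c : R) :
  D !=set0 -> has_ubound (f @` D) -> 0 <= c ->
  (forall x, D x -> g x <= c * f x) -> sup (g @` D) <= c * sup (f @` D).
Proof.
move=> [x0 Dx0] ub c0 h; apply: ge_sup; first by exists (g x0), x0.
move=> _ [x Dx <-]; apply: le_trans (h x Dx) _; rewrite ler_wpM2l //.
by apply: ub_le_sup => //; exists x.
Qed.

Lemma sup_ge_c (X : Type) (D : set X) (f g : X -> R) (c : R) :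
  D !=set0 -> has_ubound (g @` D) -> 0 <= c ->
  (forall x, D x -> c * f x <= g x) -> c * sup (f @` D) <= sup (g @` D).
Proof.
move=> [x0 Dx0] ub c0 h.
have [ce|cn0] := eqVneq c 0.
  rewrite ce mul0r; have g0 : 0 <= g x0 by have := h x0 Dx0; rewrite ce mul0r.
  apply: le_trans g0 _.
  by apply: ub_le_sup => //; exists x0.
have cp : 0 < c by rewrite lt_def cn0 c0.
rewrite mulrC -ler_pdivlMr //; apply: ge_sup; first by exists (f x0), x0.
move=> _ [x Dx <-]; rewrite ler_pdivlMr // mulrC; apply: le_trans (h x Dx) _.
by apply: ub_le_sup => //; exists x.
Qed.

Lemma numrad_ub (A : V -> V) : is_bounded_op ip A ->
  has_ubound [set cabs (ip (A x) x) | x in unit_sphere ip].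
Proof.
move=> [_ [M0 hM]]; exists M0 => _ [x ux <-]; apply: le_trans (CS _ _) _.
rewrite /unit_sphere /= in ux; rewrite ux mulr1; apply: le_trans (hM x) _.
by rewrite ux mulr1.
Qed.

Lemma part1 (A : V -> V) (p q : R) : is_bounded_op ip A -> unit_sphere ip !=set0 ->
  Num.min `|p + q| `|p - q| * numrad ip A <=
    numrad ip (fun x => p%:C *: A x + q%:C *: adjoint ip A x) /\
  numrad ip (fun x => p%:C *: A x + q%:C *: adjoint ip A x) <=
    Num.max `|p + q| `|p - q| * numrad ip A.
Proof.
move=> hA ne.
have key x : ip (p%:C *: A x + q%:C *: adjoint ip A x) x =
    p%:C * ip (A x) x + q%:C * Num.conj (ip (A x) x).
  by rewrite ipDl !ipZl [ip (adjoint _ _ _) _]ipC -adjointP.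
have m0 : 0 <= Num.min `|p + q| `|p - q| by rewrite le_min !normr_ge0.
have M0 : 0 <= Num.max `|p + q| `|p - q| by rewrite le_max !normr_ge0.
have ub := numrad_ub hA.
split.
- rewrite /numrad; apply: sup_ge_c => //.
    have [B hB] := ub; exists (Num.max `|p + q| `|p - q| * B) => _ [x ux <-].
    rewrite key; apply: le_trans (proj2 (ptwise _ _ _)) _; rewrite ler_wpM2l //.
    by apply: hB; exists x.
  by move=> x _; rewrite key; exact: (proj1 (ptwise _ _ _)).
- rewrite /numrad; apply: sup_le_c => //.
  by move=> x _; rewrite key; exact: (proj2 (ptwise _ _ _)).
Qed.

Lemma cabsR (r : R) : cabs r%:C = `|r|.
Proof. by rewrite cabsE /= expr0n /= addr0 sqrtr_sqr. Qed.
Lemma cabs0 : cabs 0 = 0 :> R.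
Proof. by rewrite cabsE /= expr0n /= addr0 sqrtr0. Qed.
Lemma cabsM (z w : R[i]) : cabs (z * w) = cabs z * cabs w.
Proof. exact: Normc.normcM. Qed.
Lemma cabsD (z w : R[i]) : cabs (z + w) <= cabs z + cabs w.
Proof. exact: le_normcD. Qed.
Lemma cabsN (z : R[i]) : cabs (- z) = cabs z.
Proof. exact: normcN. Qed.
Lemma cabsB (z w : R[i]) : cabs (z - w) <= cabs z + cabs w.
Proof. by apply: le_trans (cabsD _ _) _; rewrite cabsN. Qed.
Lemma cabsJ (z : R[i]) : cabs (Num.conj z) = cabs z.
Proof. by case: z => a b; rewrite !cabsE /= sqrrN. Qed.
Lemma cabsi : cabs 'i = 1 :> R.
Proof. by rewrite cabsE /= expr0n /= add0r expr1n sqrtr1. Qed.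
Lemma conji : Num.conj 'i = - 'i :> R[i].
Proof. by apply/eqP; rewrite eq_complex /= oppr0 !eqxx. Qed.
Lemma ii : 'i * 'i = -1 :> R[i].
Proof. by rewrite -expr2 sqr_i. Qed.

Lemma lin0 (A : V -> V) : is_bounded_op ip A -> A 0 = 0.
Proof.
move=> [Alin _]; have := Alin 1 0 0; rewrite scaler0 addr0 scale1r => /eqP.
by rewrite -subr_eq subrr eq_sym => /eqP.
Qed.
Lemma linZ (A : V -> V) a x : is_bounded_op ip A -> A (a *: x) = a *: A x.
Proof.
move=> hA; have := (proj1 hA) a x 0; rewrite !addr0 (lin0 hA) addr0 //.
Qed.
Lemma linD (A : V -> V) x y : is_bounded_op ip A -> A (x + y) = A x + A y.
Proof. by move=> hA; have := (proj1 hA) 1 x y; rewrite !scale1r. Qed.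
Lemma linN (A : V -> V) x : is_bounded_op ip A -> A (- x) = - A x.
Proof. by move=> hA; rewrite -scaleN1r linZ // scaleN1r. Qed.
Lemma linB (A : V -> V) x y : is_bounded_op ip A -> A (x - y) = A x - A y.
Proof. by move=> hA; rewrite linD // linN. Qed.

Lemma hnorm_gt0 z : z != 0 -> 0 < hnorm ip z.
Proof.
move=> zn; rewrite hnormE sqrtr_gt0 lt_def nsq_ge0 andbT.
by apply/eqP => /nsq0 h; move: zn; rewrite h eqxx.
Qed.

Lemma unitize z : z != 0 -> hnorm ip (((hnorm ip z)^-1)%:C *: z) = 1.
Proof.
move=> zn; have h := hnorm_gt0 zn.
by rewrite hnormZ cabsR ger0_norm ?invr_ge0 ?ltW // mulVf // gt_eqF.
Qed.

Lemma quad_le (A : V -> V) : is_bounded_op ip A ->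
  forall z, cabs (ip (A z) z) <= numrad ip A * nsq z.
Proof.
move=> hA z; have [->|zn] := eqVneq z 0.
  by rewrite (lin0 hA) ip0l /nsq ip0l /= mulr0 expr0n /= addr0 sqrtr0.
have h := hnorm_gt0 zn; pose u := ((hnorm ip z)^-1)%:C *: z.
have uu : hnorm ip u = 1 by exact: unitize.
have : cabs (ip (A u) u) <= numrad ip A.
  by apply: ub_le_sup; [exact: numrad_ub | exists u].
rewrite /u linZ // ipZl ipZr conjRN // mulrA cabsM cabsM !cabsR.
rewrite !ger0_norm ?invr_ge0 ?(ltW h) // -(hnorm2 z).
move: (cabs _) => c hc.
have -> : c = (hnorm ip z)^-1 * (hnorm ip z)^-1 * c * hnorm ip z ^+ 2 by field; rewrite gt_eqF.
by rewrite ler_wpM2r // sqr_ge0.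
Qed.

Lemma par a b : nsq (a - b) + nsq (a + b) = 2 * nsq a + 2 * nsq b.
Proof. rewrite nsqD nsqD nsqN ipNr ReN; lra. Qed.

Lemma opnorm_le (A : V -> V) : is_bounded_op ip A -> unit_sphere ip !=set0 ->
  opnorm ip A <= 2 * numrad ip A.
Proof.
move=> hAb [x0 ux0].
have w0 : 0 <= numrad ip A.
  apply: le_trans (cabs_ge0 (ip (A x0) x0)) _.
  by apply: ub_le_sup; [exact: numrad_ub hAb | exists x0].
apply: ge_sup; first by exists (hnorm ip (A x0)), x0.
move=> _ [x ux <-]; rewrite /unit_sphere /= in ux.
have nx : nsq x = 1 by rewrite -hnorm2 ux expr1n.
have [->|An] := eqVneq (A x) 0; first by rewrite hnorm0 mulr_ge0.
have hpos := hnorm_gt0 An; set hA := hnorm ip (A x) in hpos *.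
set y := (hA^-1)%:C *: A x.
have ny : nsq y = 1 by rewrite -hnorm2 unitize // expr1n.
have ipy : ip (A x) y = hA%:C.
  rewrite /y ipZr conjRN // ipxx -rmorphM; congr (_%:C).
  by rewrite -hnorm2 -/hA; field; rewrite gt_eqF.
clearbody y.
pose q v := ip (A v) v.
have qD v : q (x + v) = q x + ip (A x) v + ip (A v) x + q v.
  by rewrite /q (linD _ _ hAb) !ipDl !ipDr; ring.
have qB v : q (x - v) = q x - ip (A x) v - ip (A v) x + q v.
  by rewrite /q (linB _ _ hAb) !ipBl !ipBr; ring.
have pol : (4%:R : R[i]) * ip (A x) y =
    q (x + y) - q (x - y) + 'i * q (x + 'i *: y) - 'i * q (x - 'i *: y).
  rewrite !qB !qD /q !(linZ _ _ hAb) !ipZl !ipZr conji.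
  apply/eqP; rewrite -subr_eq0; apply/eqP.
  set a := ip (A x) x; set b := ip (A x) y; set c := ip (A y) x; set d := ip (A y) y.
  have -> : 4%:R * b - (a + b + c + d - (a - b - c + d) + 'i * (a + - 'i * b + 'i * c
      + 'i * (- 'i * d)) - 'i * (a - - 'i * b - 'i * c + 'i * (- 'i * d)))
      = ('i * 'i + 1) * (2%:R * b - 2%:R * c) by ring.
  by rewrite ii addNr mul0r.
have hq v : cabs (q v) <= numrad ip A * nsq v by rewrite /q; apply: (quad_le hAb).
have : cabs ((4%:R : R[i]) * ip (A x) y) <= numrad ip A * 8%:R.
  rewrite pol.
  apply: le_trans (cabsB _ _) _; apply: le_trans (lerD (cabsD _ _) (lexx _)) _.
  apply: le_trans (lerD (lerD (cabsB _ _) (lexx _)) (lexx _)) _.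
  rewrite !cabsM cabsi !mul1r.
  have := hq (x + y); have := hq (x - y); have := hq (x + 'i *: y); have := hq (x - 'i *: y).
  have p1 := par x y; have p2 := par x ('i *: y).
  have n2i : n2 'i = 1 by rewrite /n2 /= expr0n /= add0r expr1n.
  rewrite nsqZ n2i mul1r in p2.
  move: p1 p2; rewrite nx ny.
  move: (nsq (x - y)) (nsq (x + y)) (nsq (x - 'i *: y)) (nsq (x + 'i *: y)).
  move: (cabs (q _)) (cabs (q _)) (cabs (q _)) (cabs (q _)) (numrad ip A) w0 => *.
  nra.
rewrite ipy -(rmorph_nat (real_complex R)) -rmorphM cabsR ger0_norm; last first.
  by rewrite mulr_ge0 // ltW.
move=> h8; clearbody hA; lra.
Qed.

Lemma bessel (e1 e2 x : V) : nsq e1 = 1 -> nsq e2 = 1 -> ip e1 e2 = 0 ->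
  n2 (ip x e1) + n2 (ip x e2) <= nsq x.
Proof.
move=> n1 n2' o12.
have o21 : ip e2 e1 = 0 by rewrite ipC o12 rmorph0.
have i11 : ip e1 e1 = 1 by rewrite ipxx n1.
have i22 : ip e2 e2 = 1 by rewrite ipxx n2'.
set a := ip x e1; set b := ip x e2.
pose p := a *: e1 + b *: e2; pose w := x - p.
have w1 : ip w e1 = 0 by rewrite /w /p ipBl ipDl !ipZl i11 o21 -/a; ring.
have w2 : ip w e2 = 0 by rewrite /w /p ipBl ipDl !ipZl i22 o12 -/b; ring.
have wp : ip w p = 0 by rewrite /p ipDr !ipZr w1 w2; ring.
have np : nsq p = n2 a + n2 b.
  rewrite /p nsqD !nsqZ n1 n2' ipZl ipZr o12 !mulr0 /= addr0 !mulr1.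
  by [].
have -> : x = w + p by rewrite /w subrK.
rewrite nsqD wp /= np mulr0 addr0; have := nsq_ge0 w; lra.
Qed.

Lemma example (e1 e2 : V) : hnorm ip e1 = 1 -> hnorm ip e2 = 1 -> ip e1 e2 = 0 ->
  is_bounded_op ip (fun x => ip x e1 *: e2) /\
  opnorm ip (fun x => ip x e1 *: e2) = 1 /\
  numrad ip (fun x => ip x e1 *: e2) <= 2%:R^-1.
Proof.
move=> h1 h2 o12.
have n1 : nsq e1 = 1 by rewrite -hnorm2 h1 expr1n.
have n2' : nsq e2 = 1 by rewrite -hnorm2 h2 expr1n.
have i11 : ip e1 e1 = 1 by rewrite ipxx n1.
have ue1 : unit_sphere ip e1 by [].
have bnd x : hnorm ip (ip x e1 *: e2) <= hnorm ip x.
  by rewrite hnormZ h2 mulr1; apply: le_trans (CS x e1) _; rewrite h1 mulr1.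
split; [|split].
- split; first by move=> a x y; rewrite ipZDl scalerDl scalerA.
  by exists 1 => x; rewrite mul1r.
- apply/le_anti/andP; split.
    apply: ge_sup; first by exists (hnorm ip (ip e1 e1 *: e2)), e1.
    by move=> _ [x ux <-]; apply: le_trans (bnd x) _; rewrite ux.
  apply: ub_le_sup.
    by exists 1 => _ [x ux <-]; apply: le_trans (bnd x) _; rewrite ux.
  by exists e1 => //; rewrite hnormZ h2 mulr1 i11 -(rmorph1 (real_complex R)) cabsR normr1.
- apply: ge_sup; first by exists (cabs (ip (ip e1 e1 *: e2) e1)), e1.
  move=> _ [x ux <-]; rewrite /unit_sphere /= in ux.
  have nx : nsq x = 1 by rewrite -hnorm2 ux expr1n.
  have := bessel x n1 n2' o12; rewrite nx.
  rewrite ipZl cabsM [ip e2 x]ipC cabsJ -!cabs2.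
  have := cabs_ge0 (ip x e1); have := cabs_ge0 (ip x e2).
  move: (cabs (ip x e1)) (cabs (ip x e2)) => u v hv hu huv.
  have : u * v * 2%:R <= 1 by have := sqr_ge0 (u - v); nra.
  by move: (u * v) => t h; lra.
Qed.
End IP.

Unset Implicit Arguments.
Local Close Scope complex_scope.

Theorem theorem4p1 (R : realType) (V : lmodType R[i]) (ip : V -> V -> R[i])
  (HV : is_Hilbert ip)
  (Hdim : exists e1 e2 : V, [/\ hnorm ip e1 = 1, hnorm ip e2 = 1 & ip e1 e2 = 0])
  (phi psi : R -> R)
  (Hphi : {within `[0%R, 1%R], continuous phi})
  (Hpsi : {within `[0%R, 1%R], continuous psi})
  (A : V -> V) (HA : is_bounded_op ip A)
  (t : R) (Ht : t \in `[0, 1]) :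
  let m := Num.min `|phi t + psi t| `|phi t - psi t| in
  let M := Num.max `|phi t + psi t| `|phi t - psi t| in
  (m * numrad ip A <= wnumrad ip phi psi t A /\
   wnumrad ip phi psi t A <= M * numrad ip A) /\
  (m / 2 <= wnumindex ip phi psi t /\ wnumindex ip phi psi t <= M / 2).
Proof.
case: HV => HP HC; case: Hdim => e1 [e2 [h1 h2 o12]].
have ne : unit_sphere ip !=set0 by exists e1.
move=> m M.
have m0 : 0 <= m by rewrite le_min !normr_ge0.
have M0 : 0 <= M by rewrite le_max !normr_ge0.
have P1 B : is_bounded_op ip B ->
    m * numrad ip B <= wnumrad ip phi psi t B /\ wnumrad ip phi psi t B <= M * numrad ip B.
  by move=> hB; exact: (part1 HP HC (phi t) (psi t) hB ne).
split; first exact: P1.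
pose W := [set wnumrad ip phi psi t B | B in [set B | is_bounded_op ip B /\ opnorm ip B = 1]].
have lbW : lbound W (m / 2).
  move=> _ [B [hB oB] <-].
  have := opnorm_le HP hB ne; rewrite oB => h.
  apply: le_trans (proj1 (P1 B hB)); move: (numrad ip B) h => w h.
  rewrite ler_wpM2l //; lra.
have [exb [exo exn]] := example HP h1 h2 o12.
have Wne : W !=set0 by exists (wnumrad ip phi psi t (fun x => ip x e1 *: e2)), (fun x => ip x e1 *: e2).
split.
  exact: lb_le_inf.
have hinf : wnumindex ip phi psi t <= wnumrad ip phi psi t (fun x => ip x e1 *: e2).
  by apply: (ge_inf (ex_intro _ (m / 2) lbW)); exists (fun x => ip x e1 *: e2).
apply: le_trans hinf _.
apply: le_trans (proj2 (P1 _ exb)) _.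
by rewrite ler_wpM2l.
Qed.
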